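(* Let $n\ge3$, let $\overrightarrow{C_n}$ be an oriented cycle and $D$ a distance set of $\overrightarrow{C_n}$ with $\min(D)=1$. If $\overrightarrow{C_n}$ is $D$-antimagic, then $\overrightarrow{C_n}$ is either unidirectional or $\Theta$-oriented.
   Context: An oriented graph is a simple graph each of whose edges is given one direction (an arc $(u,v)$ goes from $u$ to $v$). For vertices $u,v$, $d(u,v)$ is the length of a shortest directed path from $u$ to $v$ ($d(u,u)=0$, $\infty$ if no path). A distance set of an oriented graph is a nonempty set $D$ of nonnegative integers each of which is a finite distance $d(u,v)$ for some pair of vertices. $N_D(v)=\{y : d(v,y)\in D\}$; for a bijection $f:V\to\{1,\dots,|V|\}$, $\omega_D(v)=\sum_{x\in N_D(v)}f(x)$ (empty sum $0$); $f$ is $D$-antimagic if distinct vertices have distinct $D$-weights, and the graph is $D$-antimagic if such an $f$ exists. A source is a vertex of in-degree $0$, a sink a vertex of out-degree $0$. An oriented cycle $\overrightarrow{C_n}$ is an orientation of the cycle on $v_1,\dots,v_n$. It is unidirectional if (up to relabeling) its arcs are $(v_i,v_{i+1})$, $1\le i\le n-1$, and $(v_n,v_1)$. It is $\Theta$-oriented if it has exactly one source and exactly one sink and these are adjacent; up to relabeling its arcs are $(v_i,v_{i+1})$, $1\le i\le n-1$, and $(v_1,v_n)$. *)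

(* Defs.v *)
From mathcomp Require Import all_boot.
Set Implicit Arguments. Unset Strict Implicit. Unset Printing Implicit Defensive.

Section Digraph.
Variables (T : finType) (arc : rel T).

Fixpoint walkb (k : nat) (u v : T) : bool :=
  if k is k'.+1 then [exists w, arc u w && walkb k' w v] else u == v.

Definition distb (u v : T) (k : nat) : bool :=
  walkb k u v && [forall j : 'I_k, ~~ walkb j u v].

Definition distance_set (D : pred nat) : Prop :=
  (exists k, D k) /\ (forall k, D k -> exists u v, distb u v k).

(* N_D(v); finite distances are always < |V|, so k ranges over 'I_#|T| *)
Definition NbD (D : pred nat) (v : T) : {set T} :=
  [set y | [exists k : 'I_#|T|, D k && distb v y k]].

Definition weightD (D : pred nat) (f : T -> nat) (v : T) : nat :=
  \sum_(y in NbD D v) f y.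

Definition labeling (f : T -> nat) : Prop :=
  injective f /\ (forall x, 1 <= f x <= #|T|).

Definition D_antimagic (D : pred nat) : Prop :=
  exists f : T -> nat, labeling f /\ injective (weightD D f).

Definition is_source (v : T) : bool := [forall w, ~~ arc w v].
Definition is_sink (v : T) : bool := [forall w, ~~ arc v w].

Definition unidirectional : Prop :=
  exists g : T -> 'I_#|T|, bijective g /\
    forall u v, arc u v = (val (g v) == (val (g u)).+1 %% #|T|).

Definition theta_oriented : Prop :=
  exists s t, [/\ is_source s, is_sink t,
    (forall s', is_source s' -> s' = s),
    (forall t', is_sink t' -> t' = t) & (arc s t || arc t s)].

End Digraph.

(* Oriented cycle on vertices 'I_n: edge {i, i+1 mod n} is oriented
   i -> i+1 if o i, and i+1 -> i otherwise. Every oriented cycle is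
   isomorphic to one of these. *)
Definition cycle_arc (n : nat) (o : 'I_n -> bool) : rel 'I_n :=
  fun u v => [exists i : 'I_n,
    (o i && (u == i) && (val v == i.+1 %% n)) ||
    (~~ o i && (val u == i.+1 %% n) && (v == i))].

(* Main.v *)
Require Import Defs.
From mathcomp Require Import all_boot zify.
Set Implicit Arguments. Unset Strict Implicit. Unset Printing Implicit Defensive.

Section C.
Variables (n : nat) (o : 'I_n -> bool).
Local Notation arc := (cycle_arc o).

Lemma arcE u v : arc u v =
  (o u && (v == ordS u)) || (~~ o (ord_pred u) && (v == ord_pred u)).
Proof.
apply/existsP/orP.
  move=> [i /orP[/andP[/andP[oi /eqP ->] vi]|/andP[/andP[oi ui] /eqP ->]]].
    by left; rewrite oi /=; apply/eqP/val_inj => /=; apply/eqP.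
  have -> : u = ordS i by apply/val_inj/eqP.
  by right; rewrite ordSK oi eqxx.
move=> [/andP[ou /eqP ->]|/andP[ou /eqP ->]].
  by exists u; rewrite ou !eqxx.
exists (ord_pred u); rewrite ou !eqxx /=; apply/orP; right; rewrite andbT; have := f_equal val (ord_predK u); by move=> /= ->.
Qed.

Lemma sinkE v : is_sink arc v = ~~ o v && o (ord_pred v).
Proof.
apply/forallP/andP.
  move=> H; split.
    by apply/negP=> ov; have := H (ordS v); rewrite arcE ov eqxx.
  by apply/negPn/negP=> ov; have := H (ord_pred v); rewrite arcE ov eqxx orbT.
move=> [ov op] w; rewrite arcE (negbTE ov) op /=.
done.
Qed.

Lemma sourceE v : is_source arc v = o v && ~~ o (ord_pred v).
Proof.
apply/forallP/andP.
  move=> H; split.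
    apply/negPn/negP=> ov; have := H (ordS v); rewrite arcE ordSK ov eqxx.
    by rewrite orbT.
  by apply/negP=> ov; have := H (ord_pred v); rewrite arcE ov ord_predK eqxx.
move=> [ov op] w; rewrite arcE; apply/negP=> /orP[/andP[ow /eqP e]|/andP[ow /eqP e]].
  by move: op; rewrite e ordSK ow.
by move: ov; rewrite e (negbTE ow).
Qed.
Lemma count_eq : #|[set v | is_sink arc v]| = #|[set v | is_source arc v]|.
Proof.
rewrite -!sum1dep_card !(big_mkcond (fun i => is_sink arc i)) /=.
rewrite (big_mkcond (fun i => is_source arc i)) /=.
apply: (@addnI (\sum_i (o i : nat))).
rewrite [X in _ = X + _](reindex_inj (@ord_pred_inj n)) /= -!big_split /=.
apply: eq_bigr => i _; rewrite sinkE sourceE.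
by case: (o i); case: (o (ord_pred i)).
Qed.

Lemma const_o (n0 : 0 < n) : (forall i, o i = o (ord_pred i)) ->
  forall i, o i = o (Ordinal n0).
Proof.
move=> H.
have K : forall k (lt : k < n), o (Ordinal lt) = o (Ordinal n0).
  elim=> [lt|k IH lt].
    by congr (o _); apply: val_inj.
  have lt' : k < n by apply: ltnW.
  rewrite -(IH lt') H; congr (o _); apply: val_inj => /=.
  by rewrite modnDr modn_small.
by case=> k lt; apply: K.
Qed.
End C.
Section G.
Variables (T : finType) (arc : rel T) (D : pred nat).
Hypothesis Dpos : forall k, D k -> 1 <= k.
Hypothesis D1 : D 1.
Hypothesis T2 : 1 < #|T|.

Lemma walk_sink t k y : is_sink arc t -> walkb arc k.+1 t y = false.
Proof.
move=> /forallP st /=; apply/existsP=> [[w /andP[a _]]].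
by have := st w; rewrite a.
Qed.

Lemma Nb_sink t : is_sink arc t -> NbD arc D t = set0.
Proof.
move=> st; apply/setP=> y; rewrite !inE; apply/existsP=> [[k /andP[Dk /andP[wk _]]]].
have := Dpos Dk; case: (nat_of_ord k) wk => // k' wk _.
by rewrite walk_sink in wk.
Qed.

Lemma Nb_pred a t : (forall w, arc a w = (w == t)) -> is_sink arc t -> a != t ->
  NbD arc D a = [set t].
Proof.
move=> ha st nat; apply/setP=> y; rewrite !inE; apply/existsP/eqP.
  move=> [k /andP[Dk /andP[wk _]]].
  have := Dpos Dk; case: (nat_of_ord k) wk => // k' /= /existsP[w /andP[aw wk]] _.
  move: aw; rewrite ha => /eqP ew; subst w.
  case: k' wk => [/eqP -> //|k'].
  by rewrite walk_sink.
move=> ->; exists (Ordinal T2); rewrite /= D1 /distb /=.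
apply/andP; split.
  by apply/existsP; exists t; rewrite ha !eqxx.
by apply/forallP=> j; rewrite (ord1 j) /=.
Qed.
End G.

Theorem mainTheorem5 (n : nat) (o : 'I_n -> bool) (D : pred nat) :
  3 <= n ->
  distance_set (cycle_arc o) D ->
  D 1 -> (forall k, D k -> 1 <= k) ->
  D_antimagic (cycle_arc o) D ->
  unidirectional (cycle_arc o) \/ theta_oriented (cycle_arc o).
Proof.
move=> n3 _ D1 Dpos [f [[finj frange] winj]].
have T2 : 1 < #|'I_n| by rewrite card_ord; apply: leq_trans n3.
have n0 : 0 < n by apply: leq_trans n3.
set arc := cycle_arc o.
have wsink : forall t, is_sink arc t -> weightD arc D f t = 0.
  by move=> t st; rewrite /weightD Nb_sink // big_set0.
have sinkU : forall t1 t2, is_sink arc t1 -> is_sink arc t2 -> t1 = t2.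
  by move=> t1 t2 s1 s2; apply: winj; rewrite !wsink.
case: (pickP [pred v | is_sink arc v]) => [t /= st | nosink].
  right.
  have cS : #|[set v | is_sink arc v]| = 1.
    apply: (@eq_card1 _ t) => v; rewrite !inE /=.
    apply/idP/eqP=> [sv|->//]; exact: sinkU.
  have := count_eq o; rewrite cS => /esym /mem_card1 [s Hs].
  have srcU : forall s', is_source arc s' -> s' = s.
    by move=> s' ss; have := Hs s'; rewrite inE ss inE => /esym /eqP.
  have ss : is_source arc s by have := Hs s; rewrite inE /= inE eqxx => ->.
  exists s, t; split => //; first by move=> t' st'; exact: sinkU.
  move: (st); rewrite /arc sinkE => /andP[ot opt].
  have e1 : ordS (ord_pred t) = t by apply: ord_predK.
  have e2 : ord_pred (ordS t) = t by apply: ordSK.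
  case: (boolP (is_source arc (ord_pred t))) => s1.
    rewrite -(srcU _ s1) /arc arcE opt e1 eqxx //.
  case: (boolP (is_source arc (ordS t))) => s2.
    by rewrite -(srcU _ s2) /arc arcE e2 (negbTE ot) eqxx orbT.
  exfalso.
  move: s1 s2; rewrite /arc !sourceE opt e2 (negbTE ot) /= andbT => /negbNE o1 o2.
  have h1 : forall w, arc (ord_pred t) w = (w == t).
    by move=> w; rewrite /arc arcE opt o1 e1 /= orbF.
  have h2 : forall w, arc (ordS t) w = (w == t).
    by move=> w; rewrite /arc arcE (negbTE o2) e2 (negbTE ot).
  have nt1 : ord_pred t != t.
    by apply/eqP=> e; move: opt; rewrite e (negbTE ot).
  have nt2 : ordS t != t.
    by apply/eqP=> e; move: ot; rewrite -{1}e2 e opt.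
  have ne : ord_pred t != ordS t.
    apply/eqP=> e; have := congr1 val (congr1 (@ordS n) e); rewrite e1 /=.
    move: (ltn_ord t) => tn; case: (ltnP t.+1 n) => h.
      rewrite (modn_small h); case: (ltnP t.+2 n) => h'.
        by rewrite (modn_small h'); lia.
      have -> : t.+2 = n by lia.
      by rewrite modnn; lia.
    have -> : t.+1 = n by lia.
    by rewrite modnn modn_small; lia.
  have w1 : weightD arc D f (ord_pred t) = f t
    by rewrite /weightD (Nb_pred Dpos D1 T2 h1 st nt1) big_set1.
  have w2 : weightD arc D f (ordS t) = f t
    by rewrite /weightD (Nb_pred Dpos D1 T2 h2 st nt2) big_set1.
  by move/eqP: ne; apply; apply: winj; rewrite w1 w2.
left.
have cS : #|[set v | is_sink arc v]| = 0.
  by apply: eq_card0 => v; rewrite inE; apply: nosink.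
have := count_eq o; rewrite cS => /esym /card0_eq nosrc.
have Ho : forall i, o i = o (ord_pred i).
  move=> i; have := nosink i; have := nosrc i; rewrite !inE /=.
  rewrite /arc sinkE sourceE.
  by case: (o i); case: (o (ord_pred i)).
have C := const_o n0 Ho.
have eC : #|'I_n| = n by rewrite card_ord.
case oc: (o (Ordinal n0)).
  exists (cast_ord (esym eC)); split.
    by exists (cast_ord eC) => x; apply: val_inj.
  move=> u v; rewrite /arc arcE C oc /= eC.
  by rewrite (C (ord_pred u)) oc /= orbF.
exists (cast_ord (esym eC) \o (@rev_ord n)); split.
  exists ((@rev_ord n) \o cast_ord eC) => x /=.
    by apply: rev_ord_inj; rewrite rev_ordK; apply: val_inj.
  by apply: val_inj => /=; move: (ltn_ord x) => ?; lia.
move=> u v; rewrite /arc arcE !C oc /= eC.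
rewrite -val_eqE /=.
move: (ltn_ord u) (ltn_ord v) => un vn.
case: (posnP u) => [u0|u0].
  rewrite u0 add0n (modn_small (_ : n.-1 < n)); last by lia.
  rewrite (_ : (n - 1).+1 = n); last by lia.
  rewrite modnn; apply/eqP/eqP; lia.
rewrite (_ : (u + n).-1 = u.-1 + n); last by lia.
rewrite modnDr modn_small; last by lia.
rewrite modn_small; last by lia.
apply/eqP/eqP; lia.
Qed.
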